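(* Let $\sigma(x)=1/(1+e^{-x})$, let $a,\gamma_n^*,B_n\ge1$, $\beta_n>0$, $K_n,L,r,n\in\mathbb{N}$, and let $f_{\mathbf{w}}$ be the network described in the context. Let $(X_1,Y_1),\dots,(X_n,Y_n)\in\mathbb{R}^d\times\mathbb{R}$ with $X_i\in[-a,a]^d$ and $|Y_i|\le\beta_n$ ($i=1,\dots,n$), and let $F_n(\mathbf{w})=\frac1n\sum_{i=1}^n|Y_i-f_{\mathbf{w}}(X_i)|^2$. Assume $K_n\gamma_n^*\ge\beta_n$ and that the weight vectors $\mathbf{w}_1,\mathbf{w}_2$ satisfy $\max\{|(\mathbf{w}_1)^{(L)}_{1,1,k}|,|(\mathbf{w}_2)^{(L)}_{1,1,k}|\}\le\gamma_n^*$ for $k=1,\dots,K_n$ and $\max\{|(\mathbf{w}_1)^{(l)}_{k,i,j}|,|(\mathbf{w}_2)^{(l)}_{k,i,j}|\}\le B_n$ for all $k,i,j$ and $l=1,\dots,L-1$. Then there is a constant $c_{15}>0$ depending only on $d,L,r,a$ such that $$\|(\nabla_{\mathbf{w}}F_n)(\mathbf{w}_1)-(\nabla_{\mathbf{w}}F_n)(\mathbf{w}_2)\|\le c_{15}\,K_n^{3/2}B_n^{2L}(\gamma_n^* )^2\|\mathbf{w}_1-\mathbf{w}_2\|.$$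
   Context: For a weight vector $\mathbf{w}$, $f_{\mathbf{w}}(x)=\sum_{j=1}^{K_n}w^{(L)}_{1,1,j}f^{(L)}_{j,1}(x)$, where for $k\in\{1,\dots,K_n\}$, $i\in\{1,\dots,r\}$: $f^{(l)}_{k,i}(x)=\sigma\big(\sum_{j=1}^rw^{(l-1)}_{k,i,j}f^{(l-1)}_{k,j}(x)+w^{(l-1)}_{k,i,0}\big)$ for $l=2,\dots,L$ and $f^{(1)}_{k,i}(x)=\sigma\big(\sum_{j=1}^dw^{(0)}_{k,i,j}x^{(j)}+w^{(0)}_{k,i,0}\big)$. $\|\cdot\|$ is the Euclidean norm. *)

(* Defs.v *)
From HB Require Import structures.
From mathcomp Require Import all_boot all_order all_algebra.
From mathcomp Require Import all_classical all_reals all_analysis.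
Set Implicit Arguments. Unset Strict Implicit. Unset Printing Implicit Defensive.
Import Order.TTheory GRing.Theory Num.Theory.
Local Open Scope ring_scope.

Definition sigmoid (R : realType) (x : R) : R := 1 / (1 + expR (- x)).

(* Index set of the weight vector w.
   inl (k,i,j)           : w^{(0)}_{k+1,i+1,j},  j = 0..d   (j = 0 is the bias)
   inr (inl (l,k,i,j))   : w^{(l+1)}_{k+1,i+1,j}, l+1 = 1..L-1, j = 0..r
   inr (inr k)           : w^{(L)}_{1,1,k+1},   k+1 = 1..K *)
Definition widx (d L r K : nat) : finType :=
  ('I_K * 'I_r * 'I_d.+1 + ('I_L.-1 * 'I_K * 'I_r * 'I_r.+1 + 'I_K))%type.

Section Net.
Variables (R : realType) (d L r K : nat).
Implicit Types (w : widx d L r K -> R) (x : 'I_d -> R).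

Definition w_in w (k : 'I_K) (i : 'I_r) (j : 'I_d.+1) : R := w (inl (k, i, j)).
Definition w_mid w (l : 'I_L.-1) (k : 'I_K) (i : 'I_r) (j : 'I_r.+1) : R :=
  w (inr (inl (l, k, i, j))).
Definition w_out w (k : 'I_K) : R := w (inr (inr k)).

(* w^{(m)} for middle layer m (1 <= m <= L-1); 0 outside that range (never used) *)
Definition w_layer w (m : nat) (k : 'I_K) (i : 'I_r) (j : 'I_r.+1) : R :=
  if insub m.-1 is Some l then w_mid w l k i j else 0.

(* hidden m w x k i = f^{(m+1)}_{k+1,i+1}(x) *)
Fixpoint hidden (m : nat) w x (k : 'I_K) (i : 'I_r) : R :=
  match m with
  | 0 => sigmoid (\sum_(j < d) w_in w k i (lift ord0 j) * x j + w_in w k i ord0)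
  | m'.+1 => sigmoid (\sum_(j < r) w_layer w m k i (lift ord0 j) * hidden m' w x k j
                      + w_layer w m k i ord0)
  end.

Definition net (hr : (0 < r)%N) w x : R :=
  \sum_(k < K) w_out w k * hidden L.-1 w x k (Ordinal hr).

Definition risk (n : nat) (hr : (0 < r)%N) (X : 'I_n -> 'I_d -> R) (Y : 'I_n -> R) w : R :=
  n%:R^-1 * \sum_(i < n) (Y i - net hr w (X i)) ^+ 2.

End Net.

Definition wupd (R : realType) (T : finType) (w : T -> R) (e : T) (t : R) : T -> R :=
  fun e' => if e' == e then w e' + t else w e'.

Definition grad (R : realType) (T : finType) (F : (T -> R) -> R) (w : T -> R) : T -> R :=
  fun e => derive1 (fun t : R => F (wupd w e t)) 0.

Definition enorm (R : realType) (T : finType) (v : T -> R) : R :=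
  Num.sqrt (\sum_(e : T) v e ^+ 2).

(* Main.v *)
Require Import Defs.
From HB Require Import structures.
From mathcomp Require Import all_boot all_order all_algebra.
From mathcomp Require Import all_classical all_reals all_analysis.
From mathcomp Require Import ring lra.
Set Implicit Arguments. Unset Strict Implicit. Unset Printing Implicit Defensive.
Import Order.TTheory GRing.Theory Num.Theory.
Local Open Scope classical_set_scope.
Local Open Scope ring_scope.
Section Sig.
Variable R : realType.
Implicit Types z a b : R.
Definition dsig (z : R) := sigmoid z * (1 - sigmoid z).

Lemma sig_gt0 z : 0 < sigmoid z.
Proof. by rewrite /sigmoid div1r invr_gt0 ltr_wpDr ?expR_ge0. Qed.

Lemma sig_lt1 z : sigmoid z < 1.
Proof.
have h : 1 < 1 + expR (- z) by rewrite ltrDl expR_gt0.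
rewrite /sigmoid div1r invf_lt1 //; exact: lt_trans h.
Qed.

Lemma sig_abs z : `|sigmoid z| <= 1.
Proof. by rewrite ger0_norm ?ltW ?sig_gt0 ?sig_lt1. Qed.

Lemma dsig_ge0 z : 0 <= dsig z.
Proof. by rewrite /dsig mulr_ge0 ?subr_ge0 ?ltW ?sig_gt0 ?sig_lt1. Qed.

Lemma dsig_le1 z : dsig z <= 1.
Proof. have := sig_gt0 z; have := sig_lt1 z; rewrite /dsig; nra. Qed.

Lemma dsig_abs z : `|dsig z| <= 1.
Proof. by rewrite ger0_norm ?dsig_ge0 ?dsig_le1. Qed.

Lemma is_derive_sig z : is_derive z 1 (@sigmoid R) (dsig z).
Proof.
have e0 : 1 + expR (- z) != 0 by rewrite gt_eqF // ltr_wpDr ?expR_ge0.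
have H1 : is_derive z 1 (fun y : R => 1 + expR (- y)) (- expR (- z)).
  by apply: is_derive_eq; rewrite add0r mul1r mulrN1.
have H := @is_deriveV _ (fun y : R => 1 + expR (- y)) z _ _ e0 H1.
have -> : @sigmoid R = (fun y : R => (1 + expR (- y))^-1).
  by apply/funext => y; rewrite /sigmoid div1r.
apply: is_derive_eq H _.
rewrite /dsig /sigmoid /GRing.scale /=. field. exact: e0.
Qed.

Lemma sig_lip a b : `|sigmoid a - sigmoid b| <= `|a - b|.
Proof.
wlog ab : a b / a <= b.
  move=> H; case: (leP a b) => [/H //|/ltW /H]; by rewrite distrC (distrC a).
have [|c _ E] := @MVT_segment R (@sigmoid R) dsig a b ab (fun x _ => is_derive_sig x).
  by apply: derivable_within_continuous => x _; have := is_derive_sig x; by case.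
rewrite distrC E normrM (distrC b); apply: ler_piMl => //; exact: dsig_abs.
Qed.

Lemma dsig_lip a b : `|dsig a - dsig b| <= `|a - b|.
Proof.
have E : dsig a - dsig b = (sigmoid a - sigmoid b) * (1 - sigmoid a - sigmoid b).
  by rewrite /dsig; ring.
rewrite E normrM; apply: le_trans (sig_lip a b); apply: ler_piMr => //.
have := sig_gt0 a; have := sig_gt0 b; have := sig_lt1 a; have := sig_lt1 b.
move=> *; rewrite ler_norml; apply/andP; split; lra.
Qed.
End Sig.
Arguments dsig {R}.

Lemma der_sum (R : realType) n (h : 'I_n -> R -> R) (dh : 'I_n -> R) (x : R) :
  (forall i, is_derive x 1 (h i) (dh i)) ->
  is_derive x 1 (fun t => \sum_(i < n) h i t) (\sum_(i < n) dh i).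
Proof. by move=> H; have := is_derive_sum H; rewrite fct_sumE. Qed.

Section DerH.
Variable R : realType.
Implicit Types (f g : R -> R) (x df dg : R).
Lemma der_mul f g x df dg : is_derive x 1 f df -> is_derive x 1 g dg ->
  is_derive x 1 (fun t => f t * g t) (f x * dg + g x * df).
Proof. by move=> H1 H2; have := is_deriveM H1 H2. Qed.
Lemma der_add f g x df dg : is_derive x 1 f df -> is_derive x 1 g dg ->
  is_derive x 1 (fun t => f t + g t) (df + dg).
Proof. by move=> H1 H2; have := is_deriveD H1 H2. Qed.
Lemma der_opp f x df : is_derive x 1 f df -> is_derive x 1 (fun t => - f t) (- df).
Proof. by move=> H; have := is_deriveN H. Qed.
Lemma der_cst x (c : R) : is_derive x 1 (fun _ => c) 0.
Proof. exact: is_derive_cst. Qed.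
Lemma der_comp f g x df dg : is_derive (g x) 1 f df -> is_derive x 1 g dg ->
  is_derive x 1 (fun t => f (g t)) (df * dg).
Proof. by move=> H1 H2; have := is_derive1_comp H1 H2. Qed.
End DerH.
Arguments der_mul {R f g x df dg}. Arguments der_add {R f g x df dg}. Arguments der_cst {R}. Arguments der_opp {R f x df}. Arguments der_comp {R f g x df dg}.

Section Net.
Variables (R : realType) (d L r K : nat).
Local Notation W := (widx d L r K).
Implicit Types (w : W -> R) (x : 'I_d -> R) (e : W).

Definition zin w x k i : R := \sum_(j < d) w_in w k i (lift ord0 j) * x j + w_in w k i ord0.
Definition zlay m w x k i : R :=
  \sum_(j < r) w_layer w m.+1 k i (lift ord0 j) * hidden m w x k j + w_layer w m.+1 k i ord0.

Lemma hidden0 w x k i : hidden 0 w x k i = sigmoid (zin w x k i).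
Proof. by []. Qed.
Lemma hiddenS m w x k i : hidden m.+1 w x k i = sigmoid (zlay m w x k i).
Proof. by []. Qed.

Definition dlayer e m (k : 'I_K) (i : 'I_r) (j : 'I_r.+1) : R :=
  if insub m.-1 is Some l then ((inr (inl (l, k, i, j)) : W) == e)%:R else 0.

Fixpoint dhid m w x e k i : R :=
  match m with
  | 0 => dsig (zin w x k i) *
         (\sum_(j < d) ((inl (k, i, lift ord0 j) : W) == e)%:R * x j + ((inl (k, i, ord0) : W) == e)%:R)
  | m'.+1 => dsig (zlay m' w x k i) *
         (\sum_(j < r) (dlayer e m k i (lift ord0 j) * hidden m' w x k j
                        + w_layer w m k i (lift ord0 j) * dhid m' w x e k j)
          + dlayer e m k i ord0)
  end.

Lemma wupd0 w e : wupd w e 0 = w.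
Proof. by apply/funext => e'; rewrite /wupd; case: eqP => // _; rewrite addr0. Qed.

Lemma der_w w e e' : is_derive (0:R) 1 (fun t => wupd w e t e') ((e' == e)%:R).
Proof.
rewrite /wupd; case: eqP => _.
  by apply: is_derive_eq; rewrite add0r mul1r.
exact: is_derive_cst.
Qed.

Lemma der_wl w e m k i j :
  is_derive (0:R) 1 (fun t => w_layer (wupd w e t) m k i j) (dlayer e m k i j).
Proof.
rewrite /w_layer /dlayer; case: insub => [l|]; last exact: is_derive_cst.
exact: der_w.
Qed.

Lemma der_hid w x e m k i :
  is_derive (0:R) 1 (fun t => hidden m (wupd w e t) x k i) (dhid m w x e k i).
Proof.
elim: m i => [|m IH] i.
  have Hg : is_derive (0:R) 1 (fun t => zin (wupd w e t) x k i)
     (\sum_(j < d) ((inl (k, i, lift ord0 j) : W) == e)%:R * x j + ((inl (k, i, ord0) : W) == e)%:R).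
    apply: is_deriveD; last exact: der_w.
    apply: der_sum => j.
    apply: is_derive_eq; first exact: der_mul (der_w _ _ _) (der_cst _ _).
    by rewrite /= mulr0 add0r mulrC.
  have H := der_comp (g := fun t => zin (wupd w e t) x k i) (@is_derive_sig R _) Hg.
  by rewrite /= wupd0 in H.
have Hg : is_derive (0:R) 1 (fun t => zlay m (wupd w e t) x k i)
   (\sum_(j < r) (dlayer e m.+1 k i (lift ord0 j) * hidden m w x k j
                        + w_layer w m.+1 k i (lift ord0 j) * dhid m w x e k j)
          + dlayer e m.+1 k i ord0).
  apply: der_add; last exact: der_wl.
  apply: der_sum => j.
  apply: is_derive_eq; first exact: der_mul (der_wl _ _ _ _ _ _) (IH _).
  by rewrite /= wupd0 addrC mulrC.
have H := der_comp (g := fun t => zlay m (wupd w e t) x k i) (@is_derive_sig R _) Hg.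
by rewrite /= wupd0 in H.
Qed.

Variable hr : (0 < r)%N.
Local Notation o := (Ordinal hr).

Definition dnet w x e : R :=
  \sum_(k < K) (w_out w k * dhid L.-1 w x e k o + hidden L.-1 w x k o * ((inr (inr k) : W) == e)%:R).

Lemma der_net w x e : is_derive (0:R) 1 (fun t => net hr (wupd w e t) x) (dnet w x e).
Proof.
apply: der_sum => k.
apply: is_derive_eq; first exact: der_mul (der_w _ _ _) (der_hid _ _ _ _ _ _).
by rewrite /= wupd0.
Qed.

Definition gradF {n} (X : 'I_n -> 'I_d -> R) (Y : 'I_n -> R) w e : R :=
  n%:R^-1 * \sum_(i < n) (2 * ((Y i - net hr w (X i)) * - dnet w (X i) e)).

Lemma grad_eq n (X : 'I_n -> 'I_d -> R) (Y : 'I_n -> R) w e :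
  grad (risk hr X Y) w e = gradF X Y w e.
Proof.
have H : is_derive (0:R) 1 (fun t => risk hr X Y (wupd w e t)) (gradF X Y w e).
  apply: is_derive_eq; first apply: der_mul (der_cst _ _) _.
    apply: der_sum => i.
    have H1 := der_add (der_cst 0 (Y i)) (der_opp (der_net w (X i) e)).
    exact: der_mul H1 (der_add (der_cst 0 (Y i)) (der_opp (der_net w (X i) e))).
  rewrite /gradF /= mulr0 addr0 wupd0; congr (_ * _); apply: eq_bigr => i _.
  by rewrite /= !add0r; ring.
by rewrite /grad derive1E; case: H.
Qed.
End Net.

Arguments dlayer {R d L r K}.
Section Helpers.
Variable R : realType.
Lemma sum_norm_le n (F : 'I_n -> R) c : (forall j, `|F j| <= c) ->
  `|\sum_(j < n) F j| <= n%:R * c.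
Proof.
move=> H; apply: le_trans; first exact: ler_norm_sum.
apply: le_trans; first by apply: ler_sum => j _; exact: H j.
by rewrite sumr_const card_ord mulr_natl.
Qed.

Lemma prod_diff (a1 a2 b1 b2 : R) :
  `|a1 * b1 - a2 * b2| <= `|a1 - a2| * `|b1| + `|a2| * `|b1 - b2|.
Proof.
have -> : a1 * b1 - a2 * b2 = (a1 - a2) * b1 + a2 * (b1 - b2) by ring.
by apply: le_trans (ler_normD _ _) _; rewrite !normrM.
Qed.

Lemma ind_le (b : bool) : `|(b%:R : R)| <= 1.
Proof. by case: b; rewrite ?normr1 ?normr0. Qed.

Lemma dsig_prod_diff (z1 z2 S1 S2 : R) :
  `|dsig z1 * S1 - dsig z2 * S2| <= `|z1 - z2| * `|S1| + `|S1 - S2|.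
Proof.
apply: le_trans (prod_diff _ _ _ _) _.
apply: lerD; first by apply: ler_wpM2r => //; exact: dsig_lip.
by apply: ler_piMl => //; exact: dsig_abs.
Qed.
End Helpers.
Arguments ind_le {R} b.

Section Consts.
Variables (R : realType) (d r : nat) (a : R).
Fixpoint Cm m : R := match m with 0 => a * d.+1%:R | m'.+1 => r%:R + 1 + r%:R * Cm m' end.
Fixpoint Em m : R := match m with
  | 0 => (a * d.+1%:R) ^+ 2
  | m'.+1 => Cm m'.+1 ^+ 2 + r%:R * (2 * Cm m' + Em m') end.
Hypothesis ha : 1 <= a.
Lemma Cm_ge0 m : 0 <= Cm m.
Proof.
elim: m => [|m IH] /=; first by rewrite mulr_ge0 // (le_trans ler01 ha).
by rewrite addr_ge0 ?mulr_ge0 ?addr_ge0.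
Qed.
Lemma Em_ge0 m : 0 <= Em m.
Proof.
elim: m => [|m IH] /=; first by rewrite sqr_ge0.
by rewrite addr_ge0 ?sqr_ge0 ?mulr_ge0 ?addr_ge0 ?mulr_ge0 ?Cm_ge0.
Qed.
End Consts.
Arguments Cm {R}. Arguments Em {R}.

Section Bounds.
Variables (R : realType) (d L r K : nat) (a B delta : R).
Local Notation W := (widx d L r K).
Hypotheses (ha : 1 <= a) (hB : 1 <= B) (hd : 0 <= delta).
Variables (w1 w2 : W -> R) (x : 'I_d -> R).
Hypotheses (hx : forall j, `|x j| <= a) (hv : forall e, `|w1 e - w2 e| <= delta)
  (hm1 : forall l k i j, `|w_mid w1 l k i j| <= B)
  (hm2 : forall l k i j, `|w_mid w2 l k i j| <= B).
Local Notation C := (Cm d r a).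
Local Notation E := (Em d r a).
Implicit Types (w : W -> R) (e : W).

Lemma wl_le w : (forall l k i j, `|w_mid w l k i j| <= B) ->
  forall m k i j, `|w_layer w m k i j| <= B.
Proof.
move=> H m k i j; rewrite /w_layer; case: insub => [l|]; first exact: H.
by rewrite normr0 (le_trans ler01 hB).
Qed.

Lemma wl_diff m k i j : `|w_layer w1 m k i j - w_layer w2 m k i j| <= delta.
Proof. by rewrite /w_layer; case: insub => [l|]; [exact: hv|rewrite subrr normr0]. Qed.

Lemma dl_le (e : W) m k i j : `|dlayer (R:=R) e m k i j| <= 1.
Proof. by rewrite /dlayer; case: insub => [l|]; rewrite ?ind_le ?normr0. Qed.

Lemma hid_le w m k i : `|hidden m w x k i| <= 1.
Proof. by case: m => [|m]; rewrite ?hidden0 ?hiddenS sig_abs. Qed.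

Lemma zin_diff k i : `|zin w1 x k i - zin w2 x k i| <= C 0 * delta.
Proof.
rewrite /zin opprD addrACA -sumrB.
apply: le_trans (ler_normD _ _) _.
have H1 : `|\sum_(j < d) (w_in w1 k i (lift ord0 j) * x j - w_in w2 k i (lift ord0 j) * x j)|
   <= d%:R * (delta * a).
  apply: sum_norm_le => j; rewrite -mulrBl normrM.
  by apply: ler_pM => //; exact: hv.
have H2 := hv (inl (k, i, ord0)).
rewrite /=; apply: le_trans (lerD H1 H2) _.
have hd0 : 0 <= d%:R :> R by [].
rewrite -natr1. have h1 : 0 <= (a - 1) * delta by rewrite mulr_ge0 // subr_ge0.
lra.
Qed.
Lemma B_pow m : 1 <= B ^+ m.
Proof. by rewrite exprn_ege1. Qed.

Lemma hid_diff m k i :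
  `|hidden m w1 x k i - hidden m w2 x k i| <= C m * B ^+ m * delta.
Proof.
elim: m i => [|m IH] i.
  by rewrite !hidden0 expr0 mulr1; apply: le_trans (sig_lip _ _) (zin_diff _ _).
rewrite !hiddenS; apply: le_trans (sig_lip _ _) _.
rewrite /zlay opprD addrACA -sumrB.
apply: le_trans (ler_normD _ _) _.
have H1 : `|\sum_(j < r) (w_layer w1 m.+1 k i (lift ord0 j) * hidden m w1 x k j
      - w_layer w2 m.+1 k i (lift ord0 j) * hidden m w2 x k j)|
   <= r%:R * (delta + B * (C m * B ^+ m * delta)).
  apply: sum_norm_le => j; apply: le_trans (prod_diff _ _ _ _) _.
  apply: lerD.
    by rewrite -[delta]mulr1; apply: ler_pM => //; try apply: wl_diff; try apply: hid_le.
  by apply: ler_pM => //; try apply: wl_le; try exact: IH.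
apply: le_trans (lerD H1 (wl_diff _ _ _ _)) _.
have hP := B_pow m; have hC := Cm_ge0 d r ha m.
rewrite exprS /=.
have h0 : 0 <= r%:R :> R by [].
set P := B ^+ m in hP *.
have h1 : delta <= B * P * delta.
  by rewrite ler_peMl // -[1]mulr1 ler_pM.
have h2 : r%:R * delta <= r%:R * (B * P * delta) by rewrite ler_wpM2l.
have -> : r%:R * (delta + B * (C m * P * delta)) = r%:R * delta + r%:R * C m * (B * P * delta) by ring.
have -> : (r%:R + 1 + r%:R * C m) * (B * P) * delta = r%:R * (B * P * delta) + B * P * delta + r%:R * C m * (B * P * delta) by ring.
lra.
Qed.
Lemma zlay_diff m k i :
  `|zlay m w1 x k i - zlay m w2 x k i| <= C m.+1 * B ^+ m.+1 * delta.
Proof.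
rewrite /zlay opprD addrACA -sumrB.
apply: le_trans (ler_normD _ _) _.
have H1 : `|\sum_(j < r) (w_layer w1 m.+1 k i (lift ord0 j) * hidden m w1 x k j
      - w_layer w2 m.+1 k i (lift ord0 j) * hidden m w2 x k j)|
   <= r%:R * (delta + B * (C m * B ^+ m * delta)).
  apply: sum_norm_le => j; apply: le_trans (prod_diff _ _ _ _) _.
  apply: lerD.
    by rewrite -[delta]mulr1; apply: ler_pM => //; try apply: wl_diff; try apply: hid_le.
  by apply: ler_pM => //; try apply: wl_le; try exact: hid_diff.
apply: le_trans (lerD H1 (wl_diff _ _ _ _)) _.
have hP := B_pow m; have hC := Cm_ge0 d r ha m.
rewrite exprS /=.
have h0 : 0 <= r%:R :> R by [].
set P := B ^+ m in hP *.
have h1 : delta <= B * P * delta.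
  by rewrite ler_peMl // -[1]mulr1 ler_pM.
have h2 : r%:R * delta <= r%:R * (B * P * delta) by rewrite ler_wpM2l.
have -> : r%:R * (delta + B * (C m * P * delta)) = r%:R * delta + r%:R * C m * (B * P * delta) by ring.
have -> : (r%:R + 1 + r%:R * C m) * (B * P) * delta = r%:R * (B * P * delta) + B * P * delta + r%:R * C m * (B * P * delta) by ring.
lra.
Qed.

Lemma S0_le e k i : `|\sum_(j < d) ((inl (k, i, lift ord0 j) : W) == e)%:R * x j
      + ((inl (k, i, ord0) : W) == e)%:R| <= C 0.
Proof.
  apply: le_trans (ler_normD _ _) _.
  have H1 : `|\sum_(j < d) ((inl (k, i, lift ord0 j) : W) == e)%:R * x j| <= d%:R * (1 * a).
    by apply: sum_norm_le => j; rewrite normrM; apply: ler_pM => //; apply: ind_le.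
  apply: le_trans (lerD H1 (ind_le _)) _.
  have hd0 : 0 <= d%:R :> R by [].
  rewrite /= -natr1 mul1r. have h1 : 0 <= (a - 1) by rewrite subr_ge0.
  have -> : a * (d%:R + 1) = d%:R * a + a by ring.
  lra.
Qed.

Lemma SS_le w : (forall l k i j, `|w_mid w l k i j| <= B) ->
  forall e m k i, (forall j, `|dhid m w x e k j| <= C m * B ^+ m) ->
  `|\sum_(j < r) (dlayer e m.+1 k i (lift ord0 j) * hidden m w x k j
                        + w_layer w m.+1 k i (lift ord0 j) * dhid m w x e k j)
          + dlayer e m.+1 k i ord0| <= C m.+1 * B ^+ m.+1.
Proof.
move=> hw e m k i IH.
apply: le_trans (ler_normD _ _) _.
have H1 : `|\sum_(j < r) (dlayer e m.+1 k i (lift ord0 j) * hidden m w x k j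
                        + w_layer w m.+1 k i (lift ord0 j) * dhid m w x e k j)|
   <= r%:R * (1 * 1 + B * (C m * B ^+ m)).
  apply: sum_norm_le => j; apply: le_trans (ler_normD _ _) _; rewrite !normrM.
  apply: lerD; apply: ler_pM => //; try apply: dl_le; try apply: hid_le; try apply: wl_le => //.
apply: le_trans (lerD H1 (dl_le _ _ _ _ _)) _.
have hP := B_pow m; have hC := Cm_ge0 d r ha m.
rewrite exprS /=.
have h0 : 0 <= r%:R :> R by [].
set P := B ^+ m in hP *.
have h1 : 1 <= B * P by rewrite -[1]mulr1 ler_pM.
have h2 : r%:R * 1 <= r%:R * (B * P) by rewrite ler_wpM2l.
have -> : r%:R * (1 * 1 + B * (C m * P)) = r%:R * 1 + r%:R * C m * (B * P) by ring.
have -> : (r%:R + 1 + r%:R * C m) * (B * P) = r%:R * (B * P) + B * P + r%:R * C m * (B * P) by ring.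
lra.
Qed.

Lemma dhid_le w : (forall l k i j, `|w_mid w l k i j| <= B) ->
  forall e m k i, `|dhid m w x e k i| <= C m * B ^+ m.
Proof.
move=> hw e; elim=> [|m IH] k i /=.
  rewrite expr0 mulr1 normrM; apply: le_trans (ler_piMl _ (dsig_abs _)) _ => //.
  exact: S0_le.
rewrite normrM; apply: le_trans (ler_piMl _ (dsig_abs _)) _ => //.
exact: SS_le.
Qed.

Lemma dhid_diff e m k i :
  `|dhid m w1 x e k i - dhid m w2 x e k i| <= E m * B ^+ (2 * m) * delta.
Proof.
elim: m i => [|m IH] i /=.
  apply: le_trans (dsig_prod_diff _ _ _ _) _.
  rewrite subrr normr0 addr0 expr0 mulr1.
  apply: le_trans (ler_wpM2r _ (zin_diff _ _)) _ => //.
  have hS := S0_le e k i; have hc := Cm_ge0 d r ha 0.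
  rewrite mulrAC expr2; apply: ler_wpM2r => //.
  by apply: ler_pM => //.
apply: le_trans (dsig_prod_diff _ _ _ _) _.
have hz := zlay_diff m k i.
have hS := SS_le (e:=e) (m:=m) (k:=k) hm1 i (fun j => dhid_le hm1 e m k j).
have hD : `|(\sum_(j < r) (dlayer e m.+1 k i (lift ord0 j) * hidden m w1 x k j
                        + w_layer w1 m.+1 k i (lift ord0 j) * dhid m w1 x e k j)
          + dlayer e m.+1 k i ord0) - (\sum_(j < r) (dlayer e m.+1 k i (lift ord0 j) * hidden m w2 x k j
                        + w_layer w2 m.+1 k i (lift ord0 j) * dhid m w2 x e k j)
          + dlayer e m.+1 k i ord0)| <=
    r%:R * (C m * B ^+ m * delta + (delta * (C m * B ^+ m) + B * (E m * B ^+ (2 * m) * delta))).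
  rewrite opprD addrACA subrr addr0 -sumrB; apply: sum_norm_le => j.
  have -> : forall (p q s t u v : R), (p * q + s * t) - (p * u + v * (dhid m w2 x e k j)) =
      p * (q - u) + (s * t - v * dhid m w2 x e k j) by move=> *; ring.
  apply: le_trans (ler_normD _ _) _; apply: lerD.
    by rewrite normrM; apply: le_trans (ler_piMl _ (dl_le _ _ _ _ _)) _ => //; exact: hid_diff.
  apply: le_trans (prod_diff _ _ _ _) _; apply: lerD.
    by apply: ler_pM => //; try apply: wl_diff; try apply: dhid_le.
  by apply: ler_pM => //; try apply: wl_le; try apply: IH.
apply: le_trans (lerD (ler_pM _ _ hz hS) hD) _ => //.
have hP := B_pow m; have hC := Cm_ge0 d r ha m; have hE := Em_ge0 d r ha m.
have hC1 := Cm_ge0 d r ha m.+1.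
rewrite mulnS exprD mulnC exprM exprS /=.
set C1 := C m.+1 in hC1 *.
have h0 : 0 <= r%:R :> R by [].
set P := B ^+ m in hP *.
have h1 : 1 <= B * P by rewrite -[1]mulr1 ler_pM.
have hPQ : P <= B * P by rewrite ler_peMl // (le_trans ler01 hP).
have hQQ : B * P <= (B * P) * (B * P) by rewrite ler_peMl // (le_trans ler01 h1).
have hPQ2 : P <= (B * P) * (B * P) := le_trans hPQ hQQ.
have hQP : (B * P) * P <= (B * P) * (B * P) by rewrite ler_wpM2l // (le_trans ler01 h1).
have g1 : 0 <= r%:R * C m * delta * ((B * P) * (B * P) - P).
  by rewrite mulr_ge0 ?subr_ge0 // !mulr_ge0.
have g2 : 0 <= r%:R * E m * delta * ((B * P) * (B * P) - (B * P) * P).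
  by rewrite mulr_ge0 ?subr_ge0 // !mulr_ge0.
set c1 := (r%:R + 1 + r%:R * C m) in hz hS *.
have -> : ((c1 ^+ 2 + r%:R * (2 * C m + E m)) * (B ^+ 2 * P ^+ 2) * delta) =
   c1 * (B * P) * delta * (c1 * (B * P)) + r%:R * (2 * C m + E m) * ((B * P) * (B * P)) * delta by ring.
have -> : r%:R * (C m * P * delta + (delta * (C m * P) + B * (E m * P ^+ 2 * delta))) =
   r%:R * (2 * C m) * P * delta + r%:R * E m * ((B * P) * P) * delta by ring.
lra.
Qed.
End Bounds.

Section Local.
Variables (R : realType) (d L r K : nat) (hr : (0 < r)%N).
Local Notation W := (widx d L r K).
Local Notation o := (Ordinal hr).
Implicit Types (w : W -> R) (x : 'I_d -> R) (e : W).

Definition kb (e : W) : 'I_K :=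
  match e with inl p => p.1.1 | inr (inl p) => p.1.1.2 | inr (inr k) => k end.

Lemma dlayer_local e m k i j : kb e != k -> dlayer (R:=R) e m k i j = 0.
Proof.
move=> H; rewrite /dlayer; case: insub => [l|] //.
suff -> : ((inr (inl (l, k, i, j)) : W) == e) = false by [].
by apply/negbTE; apply: contra H => /eqP <-.
Qed.

Lemma dhid_local w x e m k i : kb e != k -> dhid m w x e k i = 0.
Proof.
move=> H; elim: m i => [|m IH] i /=.
  have F : forall j, ((inl (k, i, j) : W) == e) = false.
    by move=> j; apply/negbTE; apply: contra H => /eqP <-.
  by rewrite big1 ?F ?add0r ?mulr0 // => j _; rewrite F mul0r.
rewrite big1 ?dlayer_local ?addr0 ?mulr0 // => j _.
by rewrite dlayer_local // IH mul0r mulr0 addr0.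
Qed.

Lemma dnet_loc w x e : dnet hr w x e =
  w_out w (kb e) * dhid L.-1 w x e (kb e) o
  + hidden L.-1 w x (kb e) o * ((inr (inr (kb e)) : W) == e)%:R.
Proof.
rewrite /dnet (bigD1 (kb e)) //= big1 ?addr0 // => k hk.
have hk' : kb e != k by rewrite eq_sym.
rewrite dhid_local // mulr0 add0r.
suff -> : ((inr (inr k) : W) == e) = false by rewrite mulr0.
by apply/negbTE; apply: contra hk' => /eqP <-.
Qed.
End Local.

Section NetBounds.
Variables (R : realType) (d L r K : nat) (hr : (0 < r)%N) (a B delta gamma : R).
Local Notation W := (widx d L r K).
Local Notation o := (Ordinal hr).
Local Notation M := L.-1.
Hypotheses (ha : 1 <= a) (hB : 1 <= B) (hd : 0 <= delta) (hg : 1 <= gamma).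
Variables (w1 w2 : W -> R) (x : 'I_d -> R).
Hypotheses (hx : forall j, `|x j| <= a) (hv : forall e, `|w1 e - w2 e| <= delta)
  (hm1 : forall l k i j, `|w_mid w1 l k i j| <= B)
  (hm2 : forall l k i j, `|w_mid w2 l k i j| <= B)
  (ho1 : forall k, `|w_out w1 k| <= gamma)
  (ho2 : forall k, `|w_out w2 k| <= gamma).
Local Notation C := (Cm d r a).
Local Notation E := (Em d r a).
Implicit Types (w : W -> R) (e : W).

Lemma net_diff : `|net hr w1 x - net hr w2 x| <= K%:R * (delta + gamma * (C M * B ^+ M * delta)).
Proof.
rewrite /net -sumrB; apply: sum_norm_le => k.
apply: le_trans (prod_diff _ _ _ _) _; apply: lerD.
  by rewrite -[delta]mulr1; apply: ler_pM => //; first [exact: hv | exact: hid_le].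
by apply: ler_pM => //; first [exact: ho2 | exact: (hid_diff ha hB hd hx hv hm2)].
Qed.

Lemma net_le w : (forall k, `|w_out w k| <= gamma) -> `|net hr w x| <= K%:R * gamma.
Proof.
move=> ho; rewrite /net; apply: sum_norm_le => k; rewrite normrM -[gamma]mulr1.
by apply: ler_pM => //; first [exact: ho | exact: hid_le].
Qed.

Lemma dnet_le w : (forall l k i j, `|w_mid w l k i j| <= B) ->
  (forall k, `|w_out w k| <= gamma) -> forall e,
  `|dnet hr w x e| <= gamma * (C M * B ^+ M) + 1.
Proof.
move=> hm ho e; rewrite dnet_loc; apply: le_trans (ler_normD _ _) _; rewrite !normrM.
apply: lerD; first by apply: ler_pM => //; first [exact: ho | exact: (dhid_le ha hB hx hm)].
by apply: mulr_ile1 => //; first [exact: hid_le | exact: ind_le].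
Qed.

Lemma dnet_diff e : `|dnet hr w1 x e - dnet hr w2 x e| <=
  delta * (C M * B ^+ M) + gamma * (E M * B ^+ (2 * M) * delta) + C M * B ^+ M * delta.
Proof.
rewrite !dnet_loc.
set i1 := (_ == e)%:R.
have -> : forall p q s t, (p + s * i1) - (q + t * i1) = (p - q) + (s - t) * i1
  by move=> *; ring.
apply: le_trans (ler_normD _ _) _; apply: lerD.
  apply: le_trans (prod_diff _ _ _ _) _; apply: lerD.
    by apply: ler_pM => //; first [exact: hv | exact: (dhid_le ha hB hx hm1)].
  by apply: ler_pM => //; first [exact: ho2 | exact: (dhid_diff ha hB hd hx hv hm1 hm2)].
rewrite normrM -[X in _ <= X]mulr1; apply: ler_pM => //; last exact: ind_le.
exact: (hid_diff ha hB hd hx hv hm2).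
Qed.
End NetBounds.

Section GradBound.
Variables (R : realType) (d L r K : nat) (hr : (0 < r)%N) (a B delta gamma beta : R).
Local Notation W := (widx d L r K).
Local Notation M := L.-1.
Hypotheses (ha : 1 <= a) (hB : 1 <= B) (hd : 0 <= delta) (hg : 1 <= gamma).
Variables (w1 w2 : W -> R) (n : nat) (X : 'I_n -> 'I_d -> R) (Y : 'I_n -> R).
Hypotheses (hn : (1 <= n)%N) (hx : forall i j, `|X i j| <= a)
  (hY : forall i, `|Y i| <= beta) (hbeta : beta <= K%:R * gamma)
  (hv : forall e, `|w1 e - w2 e| <= delta)
  (hm1 : forall l k i j, `|w_mid w1 l k i j| <= B)
  (hm2 : forall l k i j, `|w_mid w2 l k i j| <= B)
  (ho1 : forall k, `|w_out w1 k| <= gamma)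
  (ho2 : forall k, `|w_out w2 k| <= gamma).
Local Notation C := (Cm d r a).
Local Notation E := (Em d r a).

Definition N1 := K%:R * (delta + gamma * (C M * B ^+ M * delta)).
Definition N3 := gamma * (C M * B ^+ M) + 1.
Definition N4 := delta * (C M * B ^+ M) + gamma * (E M * B ^+ (2 * M) * delta) + C M * B ^+ M * delta.

Lemma gradF_diff e : `|gradF hr X Y w1 e - gradF hr X Y w2 e| <=
  2 * (N1 * N3 + 2 * K%:R * gamma * N4).
Proof.
rewrite /gradF -mulrBr -sumrB normrM.
have hn0 : (n%:R : R) != 0 by rewrite pnatr_eq0 -lt0n.
rewrite ger0_norm ?invr_ge0 //.
suff H : forall i, `|2 * ((Y i - net hr w1 (X i)) * - dnet hr w1 (X i) e) -
   2 * ((Y i - net hr w2 (X i)) * - dnet hr w2 (X i) e)| <= 2 * (N1 * N3 + 2 * K%:R * gamma * N4).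
  by apply: le_trans (ler_wpM2l _ (sum_norm_le H)) _; rewrite ?invr_ge0 // mulKf.
move=> i.
have -> : forall p q s t : R, 2 * (p * - q) - 2 * (s * - t) = 2 * (s * t - p * q)
  by move=> *; ring.
rewrite normrM ger0_norm // ler_pM2l //.
apply: le_trans (prod_diff _ _ _ _) _.
have -> : Y i - net hr w2 (X i) - (Y i - net hr w1 (X i)) = net hr w1 (X i) - net hr w2 (X i) by ring.
have hg0 : 0 <= gamma by rewrite (le_trans ler01 hg).
apply: lerD.
  apply: ler_pM => //.
    exact: (net_diff hr ha hB hd (hx i) hv hm2 ho2).
  exact: (dnet_le hr ha hB (hx i) hm2 ho2).
rewrite distrC; apply: ler_pM => //.
  apply: le_trans (ler_normB _ _) _.
  have := net_le hr (X i) ho1; have := hY i.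
  move=> h1 h2; have h3 : 2 * K%:R * gamma = K%:R * gamma + K%:R * gamma by ring.
  by apply: le_trans (lerD h2 h1) _; rewrite h3 lerD2l.
by rewrite distrC; exact: (dnet_diff hr ha hB hd (hx i) hv hm1 hm2 ho2).
Qed.
End GradBound.

Section Final.
Variable R : realType.

Lemma final_arith (K : nat) (a B delta gamma : R) (M L2 : nat) (C E : R) :
  1 <= B -> 0 <= delta -> 1 <= gamma -> 0 <= C -> 0 <= E -> (2 * M <= L2)%N ->
  2 * (K%:R * (delta + gamma * (C * B ^+ M * delta)) * (gamma * (C * B ^+ M) + 1)
       + 2 * K%:R * gamma * (delta * (C * B ^+ M) + gamma * (E * B ^+ (2 * M) * delta) + C * B ^+ M * delta))
  <= (2 * (1 + C) ^+ 2 + 4 * (2 * C + E)) * K%:R * gamma ^+ 2 * B ^+ L2 * delta.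
Proof.
move=> hB hd hg hC hE hML.
have hP : 1 <= B ^+ M by rewrite exprn_ege1.
have hP2 : B ^+ (2 * M) <= B ^+ L2 by apply: ler_weXn2l.
rewrite mulnC exprM in hP2 *.
set P := B ^+ M in hP hP2 *.
set BL := B ^+ L2 in hP2 *.
have hK : 0 <= K%:R :> R by [].
have hgP : 1 <= gamma * P by rewrite -[1]mulr1 ler_pM.
have hPP : P <= gamma * P ^+ 2.
  by rewrite expr2 mulrA ler_peMl // ?(le_trans ler01 hP) // -[1]mulr1 ler_pM.
have h1 : delta + gamma * (C * P * delta) <= (1 + C) * gamma * P * delta.
  have : delta <= gamma * P * delta by rewrite ler_peMl.
  have -> : (1 + C) * gamma * P * delta = gamma * P * delta + gamma * (C * P * delta) by ring.
  lra.
have h2 : gamma * (C * P) + 1 <= (1 + C) * gamma * P.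
  have -> : (1 + C) * gamma * P = gamma * P + gamma * (C * P) by ring.
  lra.
have h3 : delta * (C * P) + gamma * (E * P ^+ 2 * delta) + C * P * delta
    <= (2 * C + E) * (gamma * P ^+ 2) * delta.
  have e1 : C * P * delta <= C * (gamma * P ^+ 2) * delta.
    by apply: ler_wpM2r => //; apply: ler_wpM2l.
  have -> : (2 * C + E) * (gamma * P ^+ 2) * delta = 2 * (C * (gamma * P ^+ 2) * delta) + gamma * (E * P ^+ 2 * delta) by ring.
  have -> : delta * (C * P) = C * P * delta by ring.
  lra.
have hgP2 : 0 <= gamma * P ^+ 2 by rewrite (le_trans ler01) ?(le_trans hP).
have hg0 : 0 <= gamma by rewrite (le_trans ler01 hg).
have h4 : K%:R * (delta + gamma * (C * P * delta)) * (gamma * (C * P) + 1)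
     <= K%:R * ((1 + C) * gamma * P * delta) * ((1 + C) * gamma * P).
  have hP0 : 0 <= P by rewrite (le_trans ler01 hP).
  apply: ler_pM => //.
  - by rewrite mulr_ge0 ?addr_ge0 ?mulr_ge0.
  - by rewrite addr_ge0 ?mulr_ge0.
  - by apply: ler_wpM2l.
have h5 : 2 * K%:R * gamma * (delta * (C * P) + gamma * (E * P ^+ 2 * delta) + C * P * delta)
     <= 2 * K%:R * gamma * ((2 * C + E) * (gamma * P ^+ 2) * delta).
  by apply: ler_wpM2l; rewrite ?mulr_ge0.
apply: le_trans (ler_wpM2l _ (lerD h4 h5)) _ => //.
have -> : 2 * (K%:R * ((1 + C) * gamma * P * delta) * ((1 + C) * gamma * P) +
   2 * K%:R * gamma * ((2 * C + E) * (gamma * P ^+ 2) * delta)) =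
   (2 * (1 + C) ^+ 2 + 4 * (2 * C + E)) * K%:R * gamma ^+ 2 * P ^+ 2 * delta by ring.
apply: ler_wpM2r => //; apply: ler_wpM2l => //.
have hQ : 0 <= 2 * (1 + C) ^+ 2 + 4 * (2 * C + E) by apply: addr_ge0; apply: mulr_ge0 => //; rewrite ?sqr_ge0 // addr_ge0 // mulr_ge0.
by apply: mulr_ge0; [apply: mulr_ge0|apply: sqr_ge0].
Qed.

Lemma coord_le (T : finType) (v : T -> R) e : `|v e| <= enorm v.
Proof.
rewrite /enorm -sqrtr_sqr ler_sqrt; last by rewrite sumr_ge0 // => i _; rewrite sqr_ge0.
by rewrite (bigD1 e) //= lerDl sumr_ge0 // => i _; rewrite sqr_ge0.
Qed.

Lemma enorm_le (T : finType) (v : T -> R) c : 0 <= c -> (forall e, `|v e| <= c) ->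
  enorm v <= Num.sqrt (#|T|%:R) * c.
Proof.
move=> hc H; rewrite /enorm -(ger0_norm hc) -sqrtr_sqr -sqrtrM // ler_sqrt; last first.
  by rewrite mulr_ge0 ?sqr_ge0.
have H2 : forall e, v e ^+ 2 <= c ^+ 2.
  by move=> e; have := H e; rewrite ler_norml => /andP[h1 h2]; nra.
apply: le_trans; first by apply: ler_sum => e _; exact: H2 e.
by rewrite sumr_const mulr_natl.
Qed.
End Final.

Local Close Scope classical_set_scope.
Unset Implicit Arguments.

Theorem lemma5 (R : realType) (d L r : nat) (a : R) :
  (1 <= L)%N -> forall hr : (0 < r)%N, 1 <= a ->
  exists c15 : R, 0 < c15 /\
  forall (K n : nat) (beta gamma B : R)
         (X : 'I_n -> 'I_d -> R) (Y : 'I_n -> R)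
         (w1 w2 : widx d L r K -> R),
    (1 <= n)%N -> 0 < beta -> 1 <= gamma -> 1 <= B ->
    (forall i j, `|X i j| <= a) ->
    (forall i, `|Y i| <= beta) ->
    beta <= K%:R * gamma ->
    (forall k, Num.max `|w_out w1 k| `|w_out w2 k| <= gamma) ->
    (forall l k i j, Num.max `|w_mid w1 l k i j| `|w_mid w2 l k i j| <= B) ->
    enorm (fun e => grad (risk hr X Y) w1 e - grad (risk hr X Y) w2 e)
      <= c15 * (K%:R `^ (3%:R / 2%:R)) * B ^+ (2 * L) * gamma ^+ 2
             * enorm (fun e => w1 e - w2 e).
Proof.
move=> hL hr ha.
pose C := Cm d r a L.-1; pose E := Em d r a L.-1.
pose Q := 2 * (1 + C) ^+ 2 + 4 * (2 * C + E).
pose N0 := (r * d.+1 + L.-1 * r * r.+1 + 1)%N.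
have hC : 0 <= C by exact: Cm_ge0.
have hE : 0 <= E by exact: Em_ge0.
have hQ : 2 <= Q.
  have h1 : 1 <= (1 + C) ^+ 2.
    by rewrite exprn_ege1 // lerDl.
  have h2 : 0 <= 4 * (2 * C + E) by rewrite mulr_ge0 // addr_ge0 // mulr_ge0.
  rewrite /Q; lra.
exists (Num.sqrt N0%:R * Q); split.
  rewrite mulr_gt0 ?sqrtr_gt0 ?ltr0n ?addn1 //.
  - by rewrite /N0 addn1.
  - by apply: lt_le_trans hQ.
move=> K n beta gamma B X Y w1 w2 hn hb hg hB hX hY hbeta ho hm.
have ho1 k : `|w_out w1 k| <= gamma by have := ho k; rewrite ge_max => /andP[].
have ho2 k : `|w_out w2 k| <= gamma by have := ho k; rewrite ge_max => /andP[].
have hm1 l k i j : `|w_mid w1 l k i j| <= B by have := hm l k i j; rewrite ge_max => /andP[].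
have hm2 l k i j : `|w_mid w2 l k i j| <= B by have := hm l k i j; rewrite ge_max => /andP[].
set delta := enorm (fun e => w1 e - w2 e).
have hd : 0 <= delta by apply: sqrtr_ge0.
have hv e : `|w1 e - w2 e| <= delta by exact: (coord_le (fun e => w1 e - w2 e) e).
have hge : forall e, `|grad (risk hr X Y) w1 e - grad (risk hr X Y) w2 e|
    <= Q * K%:R * gamma ^+ 2 * B ^+ (2 * L) * delta.
  move=> e; rewrite !grad_eq.
  apply: le_trans (gradF_diff hr ha hB hd hg hn hX hY hbeta hv hm1 hm2 ho1 ho2 e) _.
  apply: final_arith => //.
  by rewrite leq_mul2l; apply/orP; right; rewrite leq_pred.
apply: le_trans (enorm_le _ hge) _.
  have hQ0 : 0 <= Q by apply: le_trans hQ.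
  have hB0 : 0 <= B ^+ (2 * L) by rewrite exprn_ge0 // (le_trans ler01 hB).
  have hg2 : 0 <= gamma ^+ 2 := sqr_ge0 _.
  by apply: mulr_ge0 => //; apply: mulr_ge0 => //; apply: mulr_ge0 => //; apply: mulr_ge0.
have hcard : #|widx d L r K| = (K * N0)%N.
  rewrite /widx card_sum card_sum !card_prod !card_ord /N0.
  by rewrite !mulnDr !mulnA muln1 [(K * r)%N]mulnC [(K * L.-1)%N]mulnC !addnA.
have hpow : K%:R `^ (3%:R / 2%:R) = K%:R * Num.sqrt (K%:R : R).
  have -> : (3%:R / 2%:R : R) = 1 + 2^-1 by field.
  rewrite powRD; last by apply/implyP => /eqP H; exfalso; move: H; apply/eqP; rewrite gt_eqF // ltr_wpDr.
  by rewrite powRr1 // powR12_sqrt.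
rewrite hcard natrM sqrtrM // hpow.
rewrite le_eqVlt; apply/orP; left; apply/eqP; rewrite /delta; ring.
Qed.
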